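(* Let $n\ge 2$ be an integer and $K=L=T=n^2$. Then every degree table $(\alpha,\beta)\in\mathcal{A}(K,L,T)$ satisfies $\operatorname{N}(\alpha,\beta)\ge n^4+3n^2$. Moreover, letting $G(n)$ denote the number of distinct integers in $\operatorname{Set}(\alpha)+\operatorname{Set}(\beta)$ for the $\mathsf{GASP}_n$ vectors with $K=L=T=n^2$, one has $G(n)/(n^4+3n^2)<1.38$ for all $n\ge 2$ and $G(n)/(n^4+3n^2)\to 1$ as $n\to\infty$; in particular $\mathsf{GASP}_n$ is asymptotically optimal, i.e. $G(n)/\min_{(\alpha,\beta)\in\mathcal{A}(n^2,n^2,n^2)}\operatorname{N}(\alpha,\beta)\to 1$.
   Context: A degree table with parameters $K,L,T$ is a tuple $(\alpha_{\mathrm p},\alpha_{\mathrm s},\beta_{\mathrm p},\beta_{\mathrm s})$ of nonnegative integer vectors of lengths $K,T,L,T$ such that, with $\alpha=(\alpha_{\mathrm p}\mid\alpha_{\mathrm s})$, $\beta=(\beta_{\mathrm p}\mid\beta_{\mathrm s})$: entries of $\alpha$ are distinct; entries of $\beta$ are distinct; for every $n\in\operatorname{Set}(\alpha_{\mathrm p})+\operatorname{Set}(\beta_{\mathrm p})$ there is a unique $i\in\operatorname{Set}(\alpha)$ and unique $j\in\operatorname{Set}(\beta)$ with $n=i+j$. $\mathcal{A}(K,L,T)$ is the set of these, $\operatorname{N}(\alpha,\beta)=|\operatorname{Set}(\alpha)+\operatorname{Set}(\beta)|$, $\operatorname{Set}(v)$ is the set of entries of $v$, $A+B=\{a+b\}$.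 The code $\mathsf{GASP}_r$ ($L\le K$, $1\le r\le\min\{K,T\}$): $\alpha_{\mathrm p}=(0,1,\ldots,K-1)$; $\alpha_{\mathrm s}$ = the $T$ smallest elements of $\{KL+j+Kt: 0\le j\le r-1, t\in\mathbb{Z}_{\ge0}\}$ in increasing order; $\beta_{\mathrm p}=(0,K,\ldots,K(L-1))$; $\beta_{\mathrm s}=(KL,\ldots,KL+T-1)$. *)

(* Defs.v *)
From HB Require Import structures.
From mathcomp Require Import all_boot all_order all_algebra.

Set Implicit Arguments. Unset Strict Implicit. Unset Printing Implicit Defensive.

Definition sumset (a b : seq nat) : seq nat := [seq i + j | i <- a, j <- b].

Definition Nsum (alpha beta : seq nat) : nat := size (undup (sumset alpha beta)).

(* (ap, as_, bp, bs) is a degree table with parameters K, L, T,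
   i.e. belongs to A(K,L,T). alpha = ap ++ as_, beta = bp ++ bs. *)
Definition is_degree_table (K L T : nat) (ap as_ bp bs : seq nat) : Prop :=
  [/\ size ap = K, size as_ = T, size bp = L, size bs = T &
      uniq (ap ++ as_)] /\ uniq (bp ++ bs) /\
      forall n, n \in sumset ap bp ->
        exists i j, [/\ i \in ap ++ as_, j \in bp ++ bs, n = i + j &
          forall i' j', i' \in ap ++ as_ -> j' \in bp ++ bs -> n = i' + j' ->
            i' = i /\ j' = j].

Definition gasp_S (K L r x : nat) : bool :=
  has (fun j => has (fun t => x == K * L + j + K * t) (iota 0 x.+1)) (iota 0 r).

Definition gasp_alpha_p (K : nat) : seq nat := iota 0 K.
(* the T smallest elements of gasp_S in increasing order: all of them lie
   below K*L + K*T (the elements with j = 0, t < T already give T of them) *)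
Definition gasp_alpha_s (K L T r : nat) : seq nat :=
  take T [seq x <- iota 0 (K * L + K * T) | gasp_S K L r x].
Definition gasp_beta_p (K L : nat) : seq nat := [seq K * i | i <- iota 0 L].
Definition gasp_beta_s (K L T : nat) : seq nat := iota (K * L) T.

Definition G (n : nat) : nat :=
  Nsum (gasp_alpha_p (n ^ 2) ++ gasp_alpha_s (n ^ 2) (n ^ 2) (n ^ 2) n)
       (gasp_beta_p (n ^ 2) (n ^ 2) ++ gasp_beta_s (n ^ 2) (n ^ 2) (n ^ 2)).

(* Main.v *)
Require Import Defs.
From HB Require Import structures.
From mathcomp Require Import all_boot all_order all_algebra.
From mathcomp Require Import all_classical all_reals all_analysis.
From mathcomp Require Import zify ring lra.
Import Order.TTheory GRing.Theory Num.Theory.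
Import numFieldNormedType.Exports.

Set Implicit Arguments. Unset Strict Implicit.

Section Rank.
Variables (a b : nat -> nat) (lA lB : nat) (Z : seq nat).
Hypothesis mona : forall i i', i < i' -> i' < lA -> a i < a i'.
Hypothesis monb : forall j j', j < j' -> j' < lB -> b j < b j'.
Hypothesis inZ : forall i j, i < lA -> j < lB -> a i + b j \in Z.

Lemma inj_a i1 i2 : i1 < lA -> i2 < lA -> a i1 = a i2 -> i1 = i2.
Proof.
move=> h1 h2 e; case: (ltngtP i1 i2) => // h.
  by have := mona h h2; rewrite e ltnn.
by have := mona h h1; rewrite e ltnn.
Qed.
Lemma inj_b i1 i2 : i1 < lB -> i2 < lB -> b i1 = b i2 -> i1 = i2.
Proof.
move=> h1 h2 e; case: (ltngtP i1 i2) => // h.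
  by have := monb h h2; rewrite e ltnn.
by have := monb h h1; rewrite e ltnn.
Qed.
Lemma leA i i' : i <= i' -> i' < lA -> a i <= a i'.
Proof. rewrite leq_eqVlt => /orP [/eqP -> //|h h']. exact: ltnW (mona h h'). Qed.
Lemma leB j j' : j <= j' -> j' < lB -> b j <= b j'.
Proof. rewrite leq_eqVlt => /orP [/eqP -> //|h h']. exact: ltnW (monb h h'). Qed.

Definition Lo i j := [seq a i' + b 0 | i' <- iota 0 i] ++ [seq a i + b j' | j' <- iota 0 j.+1].
Definition Up i j := [seq a i + b j' | j' <- iota j (lB - j)] ++
                     [seq a i' + b lB.-1 | i' <- iota i.+1 (lA - i.+1)].

Lemma size_Lo i j : size (Lo i j) = i + j.+1.
Proof. by rewrite /Lo size_cat !size_map !size_iota. Qed.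
Lemma size_Up i j : size (Up i j) = lB - j + (lA - i.+1).
Proof. by rewrite /Up size_cat !size_map !size_iota. Qed.

Lemma Lo_le i j x : i < lA -> j < lB -> x \in Lo i j -> x <= a i + b j.
Proof.
move=> hi hj; rewrite mem_cat => /orP [] /mapP [k]; rewrite mem_iota => /andP [_ hk] ->.
  have := leA (_ : k <= i) hi; have := leB (leq0n j) hj; lia.
have := leB (_ : k <= j) hj; lia.
Qed.
Lemma Up_ge i j x : i < lA -> j < lB -> x \in Up i j -> a i + b j <= x.
Proof.
move=> hi hj; rewrite mem_cat => /orP [] /mapP [k]; rewrite mem_iota => /andP [h1 h2] ->.
  have := leB h1 (_ : k < lB); lia.
have := leA (_ : i <= k) (_ : k < lA); have := leB (_ : j <= lB.-1) (_ : lB.-1 < lB); lia.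
Qed.

Lemma Lo_in i j : i < lA -> j < lB -> {subset Lo i j <= Z}.
Proof.
move=> hi hj x; rewrite mem_cat => /orP [] /mapP [k]; rewrite mem_iota => /andP [h1 h2] ->;
 apply: inZ; lia.
Qed.
Lemma Up_in i j : i < lA -> j < lB -> {subset Up i j <= Z}.
Proof.
move=> hi hj x; rewrite mem_cat => /orP [] /mapP [k]; rewrite mem_iota => /andP [h1 h2] ->;
 apply: inZ; lia.
Qed.

Lemma Lo_uniq i j : i < lA -> j < lB -> uniq (Lo i j).
Proof.
move=> hi hj; rewrite /Lo cat_uniq; apply/and3P; split.
- rewrite map_inj_in_uniq ?iota_uniq // => x y; rewrite !mem_iota => /andP [_ hx] /andP [_ hy] e.
  apply: inj_a; lia.
- apply/hasPn => x /mapP [k]; rewrite mem_iota => /andP [_ hk] ->.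
  apply/negP => /mapP [k']; rewrite mem_iota => /andP [_ hk'] e.
  have := mona (_ : k' < i) hi; have := leB (leq0n k) (_ : k < lB); lia.
- rewrite map_inj_in_uniq ?iota_uniq // => x y; rewrite !mem_iota => /andP [_ hx] /andP [_ hy] e.
  apply: inj_b; lia.
Qed.
Lemma Up_uniq i j : i < lA -> j < lB -> uniq (Up i j).
Proof.
move=> hi hj; rewrite /Up cat_uniq; apply/and3P; split.
- rewrite map_inj_in_uniq ?iota_uniq // => x y; rewrite !mem_iota => /andP [hx hx'] /andP [hy hy'] e.
  apply: inj_b; lia.
- apply/hasPn => x /mapP [k]; rewrite mem_iota => /andP [hk1 hk2] ->.
  apply/negP => /mapP [k']; rewrite mem_iota => /andP [hk' hk''] e.
  have := mona hk1 (_ : k < lA); have := leB (_ : k' <= lB.-1) (_ : lB.-1 < lB); lia.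
- rewrite map_inj_in_uniq ?iota_uniq // => x y; rewrite !mem_iota => /andP [hx hx'] /andP [hy hy'] e.
  apply: inj_a; lia.
Qed.

Lemma rank_eq : size (undup Z) < lA + lB ->
  forall i j, i.+1 < lA -> j.+1 < lB -> a i.+1 + b j = a i + b j.+1.
Proof.
move=> hs i j hi hj.
have key : forall i1 j1 i2 j2, i1 < lA -> j1 < lB -> i2 < lA -> j2 < lB ->
   i1 + j1 = i + j.+1 -> i2 + j2 = i + j.+1 -> a i1 + b j1 < a i2 + b j2 -> False.
  move=> i1 j1 i2 j2 h1 h2 h3 h4 e1 e2 lt.
  have U : uniq (Lo i1 j1 ++ Up i2 j2).
    rewrite cat_uniq Lo_uniq // Up_uniq // andbT; apply/hasPn => x /(Up_ge h3 h4) hx.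
    by apply/negP => /(Lo_le h1 h2); lia.
  have := uniq_leq_size U (_ : {subset Lo i1 j1 ++ Up i2 j2 <= undup Z}).
  rewrite size_cat size_Lo size_Up; move=> H; have {}H := H _.
  suff : lA + lB <= size (undup Z) by lia.
  apply: leq_trans (H _); first lia.
  move=> x; rewrite mem_cat mem_undup => /orP [/(Lo_in h1 h2)|/(Up_in h3 h4)] //.
case: (ltngtP (a i.+1 + b j) (a i + b j.+1)) => // h; exfalso.
  by apply: (key i.+1 j i j.+1) => //; lia.
by apply: (key i j.+1 i.+1 j) => //; lia.
Qed.
End Rank.

Lemma sort_mono (s : seq nat) : uniq s ->
  forall i j, i < j -> j < size s -> nth 0 (sort leq s) i < nth 0 (sort leq s) j.
Proof.
move=> us i j hij hj.
have st : sorted ltn (sort leq s) by rewrite ltn_sorted_uniq_leq sort_uniq us sort_sorted //; exact: leq_total.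
apply: (sorted_ltn_nth ltn_trans 0 st); rewrite ?inE ?size_sort //; lia.
Qed.
Lemma sort_in (s : seq nat) i : i < size s -> nth 0 (sort leq s) i \in s.
Proof. by move=> h; rewrite -(mem_sort leq) mem_nth // size_sort. Qed.
Lemma sort_idx (s : seq nat) x : x \in s -> exists2 i, i < size s & x = nth 0 (sort leq s) i.
Proof.
move=> h; exists (index x (sort leq s)); first by rewrite -(size_sort leq) index_mem mem_sort.
by rewrite nth_index // mem_sort.
Qed.
Lemma ap_form (a : nat -> nat) d l : (forall i, i.+1 < l -> a i.+1 = a i + d) ->
  forall i, i < l -> a i = a 0 + i * d.
Proof.
move=> h; elim=> [|i IH] hi; first by lia.
rewrite h // IH; lia.
Qed.

Lemma helper x y d e : x * d + e = y * d -> 0 < e -> d <= e.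
Proof.
move=> h he; have hxy : x < y.
  rewrite ltnNge; apply/negP => hyx; have := leq_mul hyx (leqnn d); lia.
have := leq_mul hxy (leqnn d); rewrite mulSn; lia.
Qed.

Lemma part1 N ap as_ bp bs : 2 <= N -> is_degree_table N N N ap as_ bp bs ->
  N * N + 3 * N <= Nsum (ap ++ as_) (bp ++ bs).
Proof.
move=> hN [[sap sas sbp sbs ua] [ub huniq]].
set al := ap ++ as_; set be := bp ++ bs.
have inj : forall p q p' q', p \in ap -> q \in bp -> p' \in al -> q' \in be ->
    p + q = p' + q' -> p = p' /\ q = q'.
  move=> p q p' q' hp hq hp' hq' e.
  have [i [j [hi hj e1 H]]] := huniq (p + q) (allpairs_f (fun i j => i + j) hp hq).
  have hp1 : p \in al by rewrite mem_cat hp.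
  have hq1 : q \in be by rewrite mem_cat hq.
  have [-> ->] := H p q hp1 hq1 erefl.
  by have [-> ->] := H p' q' hp' hq' e.
have uP : uniq (sumset ap bp).
  apply: allpairs_uniq.
  - by move: ua; rewrite cat_uniq => /andP [].
  - by move: ub; rewrite cat_uniq => /andP [].
  move=> [x1 y1] [x2 y2] /allpairsP [[u v] /= [hu hv [-> ->]]] /allpairsP [[u' v'] /= [hu' hv' [-> ->]]] /= e.
  have hu1 : u' \in al by rewrite mem_cat hu'.
  have hv1 : v' \in be by rewrite mem_cat hv'.
  by have [-> ->] := inj u v u' v' hu hv hu1 hv1 e.
have uas : uniq as_ by move: ua; rewrite cat_uniq => /and3P [].
have ubs : uniq bs by move: ub; rewrite cat_uniq => /and3P [].
set X := sumset al bs ++ sumset as_ be.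
have disj : forall x, x \in X -> x \in sumset ap bp -> False.
  move=> x; rewrite mem_cat => /orP [] /allpairsP [[u v] /= [hu hv ->]] /allpairsP [[p q] /= [hp hq e]].
    have hv1 : v \in be by rewrite mem_cat hv orbT.
    have [_ eq] := inj p q u v hp hq hu hv1 (esym e).
    move: ub; rewrite cat_uniq => /and3P [_ /hasPn /(_ v hv)]; by rewrite -eq hq.
  have hu1 : u \in al by rewrite mem_cat hu orbT.
  have [eq _] := inj p q u v hp hq hu1 hv (esym e).
  move: ua; rewrite cat_uniq => /and3P [_ /hasPn /(_ u hu)]; by rewrite -eq hp.
have hX : 3 * N <= size (undup X).
  rewrite leqNgt; apply/negP => hlt.
  have sal : size al = N + N by rewrite size_cat sap sas.
  have sbe : size be = N + N by rewrite size_cat sbp sbs.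
  set a := nth 0 (sort leq al); set s := nth 0 (sort leq bs).
  set c := nth 0 (sort leq as_); set b := nth 0 (sort leq be).
  have ma : forall i i', i < i' -> i' < N + N -> a i < a i'.
    by move=> i i' h h'; apply: sort_mono; rewrite // sal.
  have ms : forall i i', i < i' -> i' < N -> s i < s i'.
    by move=> i i' h h'; apply: sort_mono; rewrite // sbs.
  have mc : forall i i', i < i' -> i' < N -> c i < c i'.
    by move=> i i' h h'; apply: sort_mono; rewrite // sas.
  have mb : forall i i', i < i' -> i' < N + N -> b i < b i'.
    by move=> i i' h h'; apply: sort_mono; rewrite // sbe.
  have inX1 : forall i j, i < N + N -> j < N -> a i + s j \in X.
    move=> i j hi hj; rewrite mem_cat; apply/orP; left.
    by apply: allpairs_f; apply: sort_in; rewrite ?sal ?sbs.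
  have inX2 : forall i j, i < N -> j < N + N -> c i + b j \in X.
    move=> i j hi hj; rewrite mem_cat; apply/orP; right.
    by apply: allpairs_f; apply: sort_in; rewrite ?sas ?sbe.
  have R1 := rank_eq ma ms inX1 (_ : size (undup X) < N + N + N); have {R1}R1 := R1 ltac:(lia).
  have R2 := rank_eq mc mb inX2 (_ : size (undup X) < N + (N + N)); have {R2}R2 := R2 ltac:(lia).
  have a01 : a 0 < a 1 by apply: ma; lia.
  have c01 : c 0 < c 1 by apply: mc; lia.
  have hA : forall i, i.+1 < N + N -> a i.+1 = a i + (a 1 - a 0).
    move=> i hi; have := R1 i 0 hi ltac:(lia); have := R1 0 0 ltac:(lia) ltac:(lia); lia.
  have hS : forall j, j.+1 < N -> s j.+1 = s j + (a 1 - a 0).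
    move=> j hj; have := R1 0 j ltac:(lia) hj; lia.
  have hB : forall j, j.+1 < N + N -> b j.+1 = b j + (c 1 - c 0).
    move=> j hj; have := R2 0 j ltac:(lia) hj; lia.
  have hA' := ap_form hA; have hB' := ap_form hB.
  set d := a 1 - a 0 in hA hS hA'; set e := c 1 - c 0 in hB hB'.
  have dpos : 0 < d by rewrite /d; lia.
  have epos : 0 < e by rewrite /e; lia.
  have de : d = e.
    have c0in : c 0 \in al by rewrite mem_cat sort_in ?orbT // sas; lia.
    have c1in : c 1 \in al by rewrite mem_cat sort_in ?orbT // sas; lia.
    have s0in : s 0 \in be by rewrite mem_cat sort_in ?orbT // sbs; lia.
    have s1in : s 1 \in be by rewrite mem_cat sort_in ?orbT // sbs; lia.
    have [i0 hi0 e0] := sort_idx c0in; have [i1 hi1 e1] := sort_idx c1in.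
    have [j0 hj0 f0] := sort_idx s0in; have [j1 hj1 f1] := sort_idx s1in.
    rewrite sal in hi0 hi1; rewrite sbe in hj0 hj1.
    have := hA' i0 hi0; have := hA' i1 hi1; have := hB' j0 hj0; have := hB' j1 hj1.
    have := hS 0 ltac:(lia).
    rewrite -/a -/b in e0 e1 f0 f1.
    move=> h1 h2 h3 h4 h5.
    have le1 : d <= e by apply: (helper (x := i0) (y := i1)); rewrite /e; lia.
    have le2 : e <= d by apply: (helper (x := j0) (y := j1)); lia.
    lia.
  have claim : forall q jq ip, q \in bp -> jq < N + N -> q = b jq -> ip < N + N ->
      nth 0 ap 0 = a ip -> jq <> ip -> False.
    move=> q jq ip hq hjq eq hip ep hne.
    have pin : nth 0 ap 0 \in ap by rewrite mem_nth // sap; lia.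
    have p'in : a jq \in al by rewrite sort_in // sal.
    have q'in : b ip \in be by rewrite sort_in // sbe.
    have eqs : nth 0 ap 0 + q = a jq + b ip.
      have := hA' ip hip; have := hA' jq hjq; have := hB' ip hip; have := hB' jq hjq.
      rewrite ep eq de; lia.
    have [e1 _] := inj _ _ _ _ pin hq p'in q'in eqs.
    apply: hne; apply/eqP; rewrite -(eqn_pmul2r dpos); apply/eqP.
    have := hA' ip hip; have := hA' jq hjq; move: e1; rewrite ep; lia.
  have pin : nth 0 ap 0 \in al by rewrite mem_cat mem_nth // sap; lia.
  have [ip hip ep] := sort_idx pin; rewrite sal in hip.
  have q0in : nth 0 bp 0 \in bp by rewrite mem_nth // sbp; lia.
  have q1in : nth 0 bp 1 \in bp by rewrite mem_nth // sbp; lia.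
  have q0in' : nth 0 bp 0 \in be by rewrite mem_cat q0in.
  have q1in' : nth 0 bp 1 \in be by rewrite mem_cat q1in.
  have [j0 hj0 f0] := sort_idx q0in'; have [j1 hj1 f1] := sort_idx q1in'.
  rewrite sbe in hj0 hj1.
  have ubp : uniq bp by move: ub; rewrite cat_uniq => /and3P [].
  have neq : nth 0 bp 0 != nth 0 bp 1.
    by rewrite nth_uniq ?sbp // (leq_trans (isT : 0 < 2) hN).
  have [hh|hh] := eqVneq ip j0.
    apply: (claim _ j1 ip q1in hj1 f1 hip ep) => hh'.
    by move: neq; rewrite f0 f1 -/b -hh -hh' eqxx.
  by apply: (claim _ j0 ip q0in hj0 f0 hip ep) => hh'; rewrite hh' eqxx in hh.
have sub : {subset sumset ap bp ++ undup X <= sumset al be}.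
  move=> x; rewrite mem_cat mem_undup => /orP [|]; last rewrite mem_cat => /orP [].
  - move=> /allpairsP [[u v] /= [hu hv ->]]; apply: allpairs_f; [by rewrite mem_cat hu | by rewrite mem_cat hv].
  - move=> /allpairsP [[u v] /= [hu hv ->]]; apply: allpairs_f; [exact: hu | by rewrite mem_cat hv orbT].
  - move=> /allpairsP [[u v] /= [hu hv ->]]; apply: allpairs_f; [by rewrite mem_cat hu orbT | exact: hv].
have U : uniq (sumset ap bp ++ undup X).
  rewrite cat_uniq uP undup_uniq andbT /=; apply/hasPn => x; rewrite mem_undup => hx.
  by apply/negP => /(disj x hx).
have sub' : {subset sumset ap bp ++ undup X <= undup (sumset al be)}.
  by move=> x /sub; rewrite mem_undup.
have := uniq_leq_size U sub'; rewrite /Nsum size_cat /sumset size_allpairs sap sbp.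
rewrite -/(sumset al be) -/(sumset al bs) -/(sumset as_ be) -/X; lia.
Qed.

Lemma divmod_uniq N j j' t t' : j < N -> j' < N -> j + N * t = j' + N * t' -> j = j' /\ t = t'.
Proof.
move=> hj hj' e.
have hN : 0 < N by lia.
have e1 : (t * N + j) %% N = (t' * N + j') %% N by rewrite mulnC addnC e addnC mulnC.
rewrite !modnMDl !modn_small // in e1; split=> //.
have e2 : (t * N + j) %/ N = (t' * N + j') %/ N by rewrite mulnC addnC e addnC mulnC.
by rewrite !divnMDl // !divn_small // !addn0 in e2.
Qed.

Lemma gasp_SP K L r x : gasp_S K L r x -> exists j t, j < r /\ x = K * L + j + K * t.
Proof.
move=> /hasP [j]; rewrite mem_iota => /andP [_ hj] /hasP [t _ /eqP e].
by exists j, t; split=> //; lia.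
Qed.
Lemma gasp_SI K L r j t : 0 < K -> j < r -> gasp_S K L r (K * L + j + K * t).
Proof.
move=> hK hj; apply/hasP; exists j; first by rewrite mem_iota; lia.
apply/hasP; exists t; last by [].
rewrite mem_iota; have := leq_mul hK (leqnn t); lia.
Qed.

Section Gasp.
Variables n N : nat.
Hypothesis hn : 0 < n.
Hypothesis hN : N = n * n.

Lemma nleN : n <= N. Proof. rewrite hN; have := leq_mul hn (leqnn n); lia. Qed.
Lemma Npos : 0 < N. Proof. have := nleN; lia. Qed.

Definition W := [seq N * N + j + N * t | t <- iota 0 n, j <- iota 0 n].

Lemma W_uniq : uniq W.
Proof.
apply: allpairs_uniq; rewrite ?iota_uniq //.
move=> [t1 j1] [t2 j2] /allpairsP [[u v] /= [hu hv [-> ->]]] /allpairsP [[u' v'] /= [hu' hv' [-> ->]]] /= e.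
move: hv hv'; rewrite !mem_iota => /andP [_ hv] /andP [_ hv'].
have := nleN => hnN.
have [-> ->] := divmod_uniq (j := v) (j' := v') (t := u) (t' := u') (N := N) ltac:(lia) ltac:(lia) ltac:(lia).
by [].
Qed.

Lemma alpha_s_props : let s := gasp_alpha_s N N N n in
  [/\ size s = N, uniq s & forall x, x \in s -> exists j t, [/\ j < n, t < n & x = N * N + j + N * t]].
Proof.
move=> s.
have hnN := nleN; have hNp := Npos.
have hNn : N * n <= N * N by apply: leq_mul.
have split : N * N + N * N = (N * N + N * n) + (N * N - N * n) by lia.
set s1 := [seq x <- iota 0 (N * N + N * n) | gasp_S N N n x].
have s1big : N <= size s1.
  have := uniq_leq_size W_uniq (_ : {subset W <= s1}); rewrite size_allpairs size_iota -hN.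
  apply=> x /allpairsP [[t j] /= [ht hj ->]].
  move: ht hj; rewrite !mem_iota => /andP [_ ht] /andP [_ hj].
  rewrite mem_filter gasp_SI // mem_iota /=.
  have := leq_mul (leqnn N) (_ : t.+1 <= n); lia.
have es : s = take N s1.
  by rewrite /s /gasp_alpha_s split iotaD filter_cat takel_cat.
split.
- by rewrite es size_takel.
- by rewrite es take_uniq // filter_uniq // iota_uniq.
- move=> x; rewrite es => /mem_take; rewrite mem_filter mem_iota => /andP [/gasp_SP [j [t [hj ex]]] /andP [_ hx]].
  exists j, t; split=> //.
  rewrite ltnNge; apply/negP => hnt; have := leq_mul (leqnn N) hnt; lia.
Qed.

Lemma gasp_table : is_degree_table N N N (gasp_alpha_p N) (gasp_alpha_s N N N n)
   (gasp_beta_p N N) (gasp_beta_s N N N).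
Proof.
have [ss us hs] := alpha_s_props.
have hnN := nleN; have hNp := Npos.
have sN : forall k, k < N -> N * k + N <= N * N.
  by move=> k hk; have := leq_mul (leqnn N) (_ : k.+1 <= N); lia.
split; [split|split].
- by rewrite /gasp_alpha_p size_iota.
- exact: ss.
- by rewrite /gasp_beta_p size_map size_iota.
- by rewrite /gasp_beta_s size_iota.
- rewrite cat_uniq iota_uniq us andbT /=; apply/hasPn => x /hs [j [t [hj ht ->]]].
  rewrite /gasp_alpha_p mem_iota; have := leq_mul hNp (leqnn N); lia.
- rewrite cat_uniq iota_uniq andbT; apply/andP; split.
    rewrite map_inj_in_uniq ?iota_uniq // => x y _ _ /eqP; rewrite eqn_pmul2l // => /eqP.
    done.
  apply/hasPn => x; rewrite /gasp_beta_s mem_iota => /andP [hx _]; apply/negP => /mapP [k].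
  rewrite mem_iota => /andP [_ hk] e; have := sN k hk; lia.
- move=> m /allpairsP [[i v] /= [hi /mapP [k hk ->] ->]].
  move: hi hk; rewrite /gasp_alpha_p !mem_iota => /andP [_ hi] /andP [_ hk].
  exists i, (N * k); split.
  + by rewrite mem_cat mem_iota hi.
  + by rewrite mem_cat; apply/orP; left; apply/mapP; exists k => //; rewrite mem_iota.
  + by [].
  move=> i' j'; rewrite !mem_cat => /orP [hi'|/hs [j [t [hj ht ->]]]]; last first.
    move=> _ e; have := sN k hk; lia.
  move=> /orP [/mapP [k' hk' ->]|]; last first.
    rewrite /gasp_beta_s mem_iota => /andP [hj' _] e; have := sN k hk; lia.
  move: hi'; rewrite mem_iota => /andP [_ hi'] e.
  have [-> ->] := divmod_uniq (N := N) (j := i') (j' := i) (t := k') (t' := k) ltac:(lia) ltac:(lia) ltac:(lia).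
  by [].
Qed.

Definition Ulist := iota 0 (N * N + 2 * N) ++
  [seq N * N + N * m + j | m <- iota 2 (N - 2), j <- iota 0 n] ++ iota (2 * (N * N)) (N * n + n).

Lemma G_upper : Nsum (gasp_alpha_p N ++ gasp_alpha_s N N N n) (gasp_beta_p N N ++ gasp_beta_s N N N)
   <= N * N + 2 * N + (N - 2) * n + (N * n + n).
Proof.
have [ss us hs] := alpha_s_props.
have hnN := nleN; have hNp := Npos.
suff sub : {subset undup (sumset (gasp_alpha_p N ++ gasp_alpha_s N N N n) (gasp_beta_p N N ++ gasp_beta_s N N N)) <= Ulist}.
  have := uniq_leq_size (undup_uniq _) sub; rewrite /Nsum /Ulist !size_cat size_allpairs !size_iota; lia.
move=> x; rewrite mem_undup => /allpairsP [[u v] /= []].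
rewrite /Ulist !mem_cat /gasp_alpha_p /gasp_beta_s !mem_iota => hu hv ->.
case/orP: hu => [/andP [_ hu]|/hs [j [t [hj ht ->]]]]; case/orP: hv => [/mapP [k]|/andP [hv1 hv2]].
- rewrite mem_iota => /andP [_ hk] ->; apply/orP; left.
  have := leq_mul (leqnn N) (_ : k.+1 <= N); lia.
- apply/orP; left; lia.
- rewrite mem_iota => /andP [_ hk] ->.
  have e : N * N + j + N * t + N * k = N * N + N * (t + k) + j by lia.
  rewrite e; set m := t + k.
  case: (ltnP m 2) => hm2.
    apply/orP; left; have := leq_mul (leqnn N) (_ : m <= 1); lia.
  case: (ltnP m N) => hmN.
    apply/orP; right; apply/orP; left; apply/allpairsP; exists (m, j); rewrite /= !mem_iota; split=> //; lia.
  apply/orP; right; apply/orP; right.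
  have := leq_mul (leqnn N) hmN; have := leq_mul (leqnn N) (_ : m.+1 <= N + n); lia.
- apply/orP; right; apply/orP; right.
  have := leq_mul (leqnn N) (_ : t.+1 <= n); lia.
Qed.
End Gasp.


Local Open Scope classical_set_scope.
Local Open Scope ring_scope.

Lemma t1 (n : nat) : (4 <= n)%N -> (100 * (n^4 + 2 * n^3 + 2 * n^2) < 138 * (n^4 + 3 * n^2))%N.
Proof. move=> h. have [k ->] : exists k, n = (k + 4)%N by exists (n - 4)%N; lia. nia. Qed.

Lemma ratio_cvg (R : realType) (g m : nat -> nat) :
 (forall n, (2 <= n)%N -> [/\ (n^4 <= m n)%N, (g n <= m n + 2*n^3)%N & (m n <= g n + 2*n^3)%N]) ->
 (fun n => (g n)%:R / (m n)%:R : R) @ \oo --> (1 : R).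
Proof.
move=> H; apply/cvgrPdist_le => eps eps0.
near=> n.
have h2 : (2 <= n)%N by near: n; exact: nbhs_infty_ge.
have hr : 2 / eps <= n%:R by near: n; exact: nbhs_infty_ger.
have [h1 h3 h4] := H n h2.
have x2 : 2 <= n%:R :> R by rewrite (ler_nat R 2 n).
have M4 : (n%:R ^+ 4 : R) <= (m n)%:R by rewrite -natrX ler_nat.
have A1 : (g n)%:R <= (m n)%:R + 2 * n%:R ^+ 3 :> R.
  by rewrite -natrX -[2]/(2%:R) -natrM -natrD ler_nat.
have A2 : (m n)%:R <= (g n)%:R + 2 * n%:R ^+ 3 :> R.
  by rewrite -natrX -[2]/(2%:R) -natrM -natrD ler_nat.
have ex : 2 <= eps * n%:R.
  by rewrite -ler_pdivrMl // mulrC.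
set x := n%:R : R in x2 M4 A1 A2 ex *.
set M := (m n)%:R : R in M4 A1 A2 *.
set Gr := (g n)%:R : R in A1 A2 *.
have Mpos : 0 < M by apply: lt_le_trans M4; rewrite exprn_gt0 //; lra.
have T1 : 2 * x ^+ 3 <= eps * M.
  have : eps * x ^+ 4 <= eps * M by rewrite ler_pM2l.
  have : 2 * x ^+ 3 <= (eps * x) * x ^+ 3 by rewrite ler_pM2r ?exprn_gt0 //; lra.
  have -> : eps * x * x ^+ 3 = eps * x ^+ 4 by rewrite -mulrA -exprS.
  lra.
have e : 1 - Gr / M = (M - Gr) / M by field; lra.
rewrite e normrM normfV (gtr0_norm Mpos) ler_pdivrMr // ler_norml; lra.
Unshelve. all: by end_near. Qed.

Unset Implicit Arguments. Set Strict Implicit.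
Local Open Scope classical_set_scope.
Local Open Scope ring_scope.

Lemma ratio_lt (R : realType) (a b : nat) : (100 * a < 138 * b)%N -> (0 < b)%N ->
  a%:R / b%:R < 138 / 100 :> R.
Proof.
move=> h hb; rewrite ltr_pdivrMr ?ltr0n //.
have : (100 * a)%:R < (138 * b)%:R :> R by rewrite ltr_nat.
rewrite !natrM; lra.
Qed.

Theorem corollary1 (R : realType) :
  [/\ (forall n : nat, (2 <= n)%N ->
         forall ap as_ bp bs : seq nat,
           is_degree_table (n ^ 2) (n ^ 2) (n ^ 2) ap as_ bp bs ->
           (n ^ 4 + 3 * n ^ 2 <= Nsum (ap ++ as_) (bp ++ bs))%N),
      (forall n : nat, (2 <= n)%N ->
         (G n)%:R / (n ^ 4 + 3 * n ^ 2)%:R < 138 / 100 :> R),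
      (fun n : nat => (G n)%:R / (n ^ 4 + 3 * n ^ 2)%:R : R) @ \oo --> (1 : R) &
      exists m : nat -> nat,
        (forall n : nat, (2 <= n)%N ->
           (exists ap as_ bp bs,
              is_degree_table (n ^ 2) (n ^ 2) (n ^ 2) ap as_ bp bs /\
              Nsum (ap ++ as_) (bp ++ bs) = m n) /\
           (forall ap as_ bp bs,
              is_degree_table (n ^ 2) (n ^ 2) (n ^ 2) ap as_ bp bs ->
              (m n <= Nsum (ap ++ as_) (bp ++ bs))%N)) /\
        (fun n : nat => (G n)%:R / (m n)%:R : R) @ \oo --> (1 : R)].
Proof.
have e4 : forall n, (n ^ 4 = n ^ 2 * n ^ 2)%N by move=> n; rewrite -expnD.
have e3 : forall n, (n ^ 3 = n ^ 2 * n)%N by move=> n; rewrite -expnSr.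
have P1 : forall n : nat, (2 <= n)%N ->
         forall ap as_ bp bs : seq nat,
           is_degree_table (n ^ 2) (n ^ 2) (n ^ 2) ap as_ bp bs ->
           (n ^ 4 + 3 * n ^ 2 <= Nsum (ap ++ as_) (bp ++ bs))%N.
  move=> n hn ap as_ bp bs H.
  have h2 : (2 <= n ^ 2)%N by have := leq_mul hn hn; rewrite mulnn; lia.
  by have := part1 h2 H; rewrite e4.
have Gtab : forall n, (1 <= n)%N -> is_degree_table (n ^ 2) (n ^ 2) (n ^ 2)
    (gasp_alpha_p (n ^ 2)) (gasp_alpha_s (n ^ 2) (n ^ 2) (n ^ 2) n)
    (gasp_beta_p (n ^ 2) (n ^ 2)) (gasp_beta_s (n ^ 2) (n ^ 2) (n ^ 2)).
  by move=> n hn; apply: gasp_table.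
have Gup : forall n, (1 <= n)%N -> (G n <= n ^ 4 + 2 * n ^ 3 + 2 * n ^ 2)%N.
  move=> n hn; have := G_upper (n := n) (N := (n ^ 2)%N) hn erefl.
  rewrite /G e4 e3; set N := (n ^ 2)%N.
  have NP : (0 < N)%N by rewrite expn_gt0 hn.
  have : ((N - 2).+1 * n <= N * n)%N by apply: leq_mul => //; lia.
  rewrite mulSn; lia.
have Glow : forall n, (2 <= n)%N -> (n ^ 4 + 3 * n ^ 2 <= G n)%N.
  by move=> n hn; apply: P1 => //; apply: Gtab; lia.
split.
- exact: P1.
- move=> n hn; apply: ratio_lt; last by rewrite addn_gt0 expn_gt0; apply/orP; left; lia.
  case: n hn => [|[|[|[|n]]]] // _.
  have := Gup n.+4 erefl; have := t1 (n := n.+4) erefl; lia.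
- apply: ratio_cvg => n hn; split.
  + lia.
  + have := Gup n ltac:(lia); lia.
  + have := Glow n hn; lia.
- have ex : forall n, exists k, (2 <= n)%N ->
     [/\ (exists ap as_ bp bs,
              is_degree_table (n ^ 2) (n ^ 2) (n ^ 2) ap as_ bp bs /\
              Nsum (ap ++ as_) (bp ++ bs) = k),
         (forall ap as_ bp bs,
              is_degree_table (n ^ 2) (n ^ 2) (n ^ 2) ap as_ bp bs ->
              (k <= Nsum (ap ++ as_) (bp ++ bs))%N) &
         (k <= G n)%N].
    move=> n; case: (leqP 2 n) => hn; last by exists 0 => h; lia.
    pose P := fun k => `[< exists ap as_ bp bs,
              is_degree_table (n ^ 2) (n ^ 2) (n ^ 2) ap as_ bp bs /\
              Nsum (ap ++ as_) (bp ++ bs) = k >].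
    have PG : P (G n).
      apply/asboolP.
      by exists (gasp_alpha_p (n ^ 2)), (gasp_alpha_s (n ^ 2) (n ^ 2) (n ^ 2) n),
        (gasp_beta_p (n ^ 2) (n ^ 2)), (gasp_beta_s (n ^ 2) (n ^ 2) (n ^ 2)); split => //; apply: Gtab; lia.
    have exP : exists k, P k by exists (G n).
    case: (ex_minnP exP) => k /asboolP Pk kmin.
    exists k => _; split => //; last exact: kmin.
    by move=> ap as_ bp bs H; apply: kmin; apply/asboolP; exists ap, as_, bp, bs.
  have [m hm] := choice ex.
  exists m; split.
    by move=> n hn; have [h1 h2 _] := hm n hn; split.
  apply: ratio_cvg => n hn.
  have [[ap [as_ [bp [bs [H e]]]]] h2 h3] := hm n hn.
  have := P1 n hn _ _ _ _ H; rewrite e => hlow.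
  have := Gup n ltac:(lia); split; lia.
Qed.
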